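(* Let $A\subseteq\mathbb{N}$. Then there exists a subset $B\subseteq A$ such that $B\in\mathcal{D}$ and $d(B)=\underline{\underline{d}}(A)$. Similarly, there exists a superset $C\supseteq A$ such that $C\in\mathcal{D}$ and $d(C)=\overline{\overline{d}}(A)$.
   Context: $\mathbb{N}=\{1,2,3,\dots\}$. For $A\subseteq\mathbb{N}$ let $A(n)=|A\cap[1,n]|$. Let $\mathcal{D}$ be the collection of all $A\subseteq\mathbb{N}$ for which the asymptotic density $d(A)=\lim_{n\to\infty}\frac{A(n)}{n}$ exists. Define $\underline{\underline{d}}(A)=\sup\{d(B);\ B\subseteq A,\ B\in\mathcal{D}\}$ and $\overline{\overline{d}}(A)=\inf\{d(C);\ C\supseteq A,\ C\in\mathcal{D}\}$. *)

(* Defs.v *)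
From Stdlib Require Import Reals.
Open Scope R_scope.

(* A subset A of N = {1,2,3,...} is represented by its indicator A : nat -> bool;
   the value at 0 is irrelevant (0 is never counted). *)

Fixpoint cnt (A : nat -> bool) (n : nat) : nat :=
  match n with
  | O => O
  | S m => (cnt A m + (if A (S m) then 1 else 0))%nat
  end.

Definition has_density (A : nat -> bool) (d : R) : Prop :=
  Un_cv (fun n => INR (cnt A n) / INR n) d.

Definition subsetN (B A : nat -> bool) : Prop :=
  forall n : nat, (1 <= n)%nat -> B n = true -> A n = true.

Definition is_lower_bound (E : R -> Prop) (m : R) : Prop :=
  forall x, E x -> m <= x.

Definition is_glb (E : R -> Prop) (m : R) : Prop :=
  is_lower_bound E m /\ (forall b, is_lower_bound E b -> b <= m).

Definition is_lower_dd (A : nat -> bool) (x : R) : Prop :=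
  is_lub (fun d => exists B, subsetN B A /\ has_density B d) x.

Definition is_upper_dd (A : nat -> bool) (x : R) : Prop :=
  is_glb (fun d => exists C, subsetN A C /\ has_density C d) x.

(* Main.v *)
Require Import Defs.
From Stdlib Require Import Reals.
From Stdlib Require Import Lra Lia Classical.
Open Scope R_scope.

Definition gstep (A : nat -> bool) (s : R) (m gm : nat) : bool :=
  A (S m) && (if Rle_dec (INR gm + 1) (s * INR (S m)) then true else false).

Fixpoint g (A : nat -> bool) (s : R) (n : nat) : nat :=
  match n with
  | O => O
  | S m => (g A s m + (if gstep A s m (g A s m) then 1 else 0))%nat
  end.

Definition GB (A : nat -> bool) (s : R) (n : nat) : bool :=
  match n with O => false | S m => gstep A s m (g A s m) end.

Lemma cnt_GB A s n : cnt (GB A s) n = g A s n.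
Proof. induction n as [|n IH]; simpl; [reflexivity|]. rewrite IH. reflexivity. Qed.

Lemma cnt_le B n : (cnt B n <= n)%nat.
Proof. induction n; simpl; [lia|]. destruct (B (S n)); lia. Qed.

Lemma g_le A s n : 0 <= s -> INR (g A s n) <= s * INR n.
Proof.
  intro Hs. induction n as [|n IH].
  - simpl. lra.
  - change (g A s (S n)) with (g A s n + (if gstep A s n (g A s n) then 1 else 0))%nat.
    destruct (gstep A s n (g A s n)) eqn:E.
    + unfold gstep in E. apply andb_prop in E. destruct E as [_ E].
      destruct (Rle_dec (INR (g A s n) + 1) (s * INR (S n))) as [h|h]; [|discriminate].
      rewrite plus_INR. simpl (INR 1). exact h.
    + rewrite Nat.add_0_r. rewrite S_INR. nra.
Qed.

Lemma sat A s B' : subsetN B' A -> forall n, exists m, (m <= n)%nat /\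
  s * INR m - 1 <= INR (g A s m) /\ (g A s m + cnt B' n <= g A s n + cnt B' m)%nat.
Proof.
  intros Hsub n. induction n as [|n IH].
  - exists O. simpl. split; [lia|]. split; [lra|lia].
  - destruct (Rle_dec (s * INR (S n) - 1) (INR (g A s (S n)))) as [h|h].
    + exists (S n). split; [lia|]. split; [exact h|lia].
    + destruct IH as [m [Hm1 [Hm2 Hm3]]]. exists m. split; [lia|]. split; [exact Hm2|].
      assert (Hg: g A s (S n) = (g A s n + if gstep A s n (g A s n) then 1 else 0)%nat) by reflexivity.
      assert (Hc: cnt B' (S n) = (cnt B' n + if B' (S n) then 1 else 0)%nat) by reflexivity.
      assert (Hmono: INR (g A s n) <= INR (g A s (S n))) by (apply le_INR; rewrite Hg; lia).
      destruct (B' (S n)) eqn:EB.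
      * assert (HA: A (S n) = true) by (apply Hsub; [lia|exact EB]).
        assert (Hst: gstep A s n (g A s n) = true).
        { unfold gstep. rewrite HA. rewrite Bool.andb_true_l.
          destruct (Rle_dec (INR (g A s n) + 1) (s * INR (S n))); [reflexivity|].
          exfalso. lra. }
        rewrite Hst in Hg. lia.
      * lia.
Qed.

Lemma div_bounds x n l e : 0 < n -> Rabs (x / n - l) < e -> (l - e) * n < x /\ x < (l + e) * n.
Proof.
  intros Hn H. apply Rabs_def2 in H. destruct H as [H1 H2].
  assert (Hx : x = (x / n) * n) by (field; lra).
  rewrite Hx. split; apply Rmult_lt_compat_r; lra.
Qed.

Lemma density_le1 B d : has_density B d -> d <= 1.
Proof.
  intro H. apply Rnot_lt_le. intro Hd.
  destruct (H (d - 1)) as [N HN]; [lra|].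
  specialize (HN (S N) ltac:(lia)). unfold R_dist in HN.
  apply div_bounds in HN; [|apply lt_0_INR; lia].
  pose proof (le_INR _ _ (cnt_le B (S N))).
  pose proof (pos_INR (S N)).
  destruct HN. nra.
Qed.

Lemma cnt_false n : cnt (fun _ => false) n = O.
Proof. induction n; simpl; [reflexivity|]. rewrite IHn. reflexivity. Qed.

Lemma density_empty : has_density (fun _ => false) 0.
Proof.
  intros eps He. exists O. intros n _. rewrite cnt_false. unfold R_dist. simpl INR.
  unfold Rdiv. rewrite Rmult_0_l, Rminus_0_r, Rabs_R0. exact He.
Qed.

Definition LE (A : nat -> bool) := fun d => exists B, subsetN B A /\ has_density B d.

Lemma GB_density A s : is_lub (LE A) s -> 0 <= s -> has_density (GB A s) s.
Proof.
  intros [Hub Hl] Hs0 eps Heps.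
  destruct (classic (exists d, LE A d /\ s - eps/4 < d)) as [[d' [[B' [Hsub HB']] Hd']]|Hno].
  2:{ exfalso. assert (s <= s - eps/4); [|lra]. apply Hl. intros d Hd.
      apply Rnot_lt_le. intro. apply Hno. exists d. split; [exact Hd|lra]. }
  assert (Hd's : d' <= s) by (apply Hub; exists B'; split; assumption).
  destruct (HB' (eps/4)) as [N1 HN1]; [lra|].
  set (K := INR N1 + 1).
  destruct (INR_unbounded (4 * K / eps)) as [N2 HN2].
  exists (S (N1 + N2)). intros n Hn.
  assert (Hnpos : 0 < INR n) by (apply lt_0_INR; lia).
  rewrite cnt_GB. unfold R_dist.
  pose proof (g_le A s n Hs0) as Hup.
  destruct (sat A s B' Hsub n) as [m [Hm1 [Hm2 Hm3]]].
  assert (Hm3r : INR (g A s m) + INR (cnt B' n) <= INR (g A s n) + INR (cnt B' m)).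
  { rewrite <- !plus_INR. apply le_INR. exact Hm3. }
  assert (Hmn : INR m <= INR n) by (apply le_INR; exact Hm1).
  assert (HBn : (d' - eps/4) * INR n < INR (cnt B' n)).
  { apply (div_bounds _ _ d' (eps/4)); [exact Hnpos|]. apply HN1. lia. }
  assert (HBm : INR (cnt B' m) <= (s + eps/4) * INR m + INR N1).
  { destruct (Compare_dec.le_lt_dec N1 m) as [h|h].
    - destruct m as [|m'].
      + simpl. assert (0 <= INR N1) by apply pos_INR. lra.
      + assert (0 < INR (S m')) by (apply lt_0_INR; lia).
        destruct (div_bounds (INR (cnt B' (S m'))) (INR (S m')) d' (eps/4)) as [_ H2];
          [assumption| apply HN1; exact h|].
        assert (d' * INR (S m') <= s * INR (S m')) by (apply Rmult_le_compat_r; lra).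
        assert (0 <= INR N1) by apply pos_INR. nra.
    - pose proof (le_INR _ _ (cnt_le B' m)).
      assert (INR m <= INR N1) by (apply le_INR; lia).
      assert (0 <= INR m) by apply pos_INR. nra. }
  assert (HN2n : INR N2 <= INR n) by (apply le_INR; lia).
  assert (HK : 4 * K < eps * INR n).
  { assert (4 * K / eps < INR n) by lra.
    assert (4 * K = (4 * K / eps) * eps) by (field; lra).
    rewrite H0. rewrite (Rmult_comm eps). apply Rmult_lt_compat_r; lra. }
  assert (Hem : eps * INR m <= eps * INR n) by (apply Rmult_le_compat_l; lra).
  assert (Hdn : (s - eps/4) * INR n < d' * INR n) by (apply Rmult_lt_compat_r; lra).
  assert (Hlow : (s - eps) * INR n < INR (g A s n)).
  { unfold K in HK. nra. }
  assert (Hq1 : INR (g A s n) / INR n <= s).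
  { apply (Rmult_le_reg_r (INR n)); [exact Hnpos|].
    replace (INR (g A s n) / INR n * INR n) with (INR (g A s n)) by (field; lra). lra. }
  assert (Hq2 : s - eps < INR (g A s n) / INR n).
  { apply (Rmult_lt_reg_r (INR n)); [exact Hnpos|].
    replace (INR (g A s n) / INR n * INR n) with (INR (g A s n)) by (field; lra). lra. }
  apply Rabs_def1; lra.
Qed.

Lemma lower_part A : exists (B : nat -> bool) (x : R),
      subsetN B A /\ has_density B x /\ is_lower_dd A x.
Proof.
  destruct (completeness (LE A)) as [s Hs].
  - exists 1. intros d [B [_ HB]]. exact (density_le1 B d HB).
  - exists 0, (fun _ => false). split; [intros n _ H; discriminate|exact density_empty].
  - assert (Hs0 : 0 <= s).
    { apply (proj1 Hs). exists (fun _ => false). split; [intros n _ H; discriminate|exact density_empty]. }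
    exists (GB A s), s. split; [|split].
    + intros n Hn H. destruct n as [|n]; [lia|]. simpl in H. unfold gstep in H.
      apply andb_prop in H. tauto.
    + apply GB_density; assumption.
    + exact Hs.
Qed.

Lemma cnt_compl B n : (cnt (fun k => negb (B k)) n + cnt B n = n)%nat.
Proof. induction n; simpl; [reflexivity|]. destruct (B (S n)); simpl; lia. Qed.

Lemma compl_density B x : has_density B x -> has_density (fun k => negb (B k)) (1 - x).
Proof.
  intros H eps He. destruct (H eps He) as [N HN]. exists (S N). intros n Hn.
  specialize (HN n ltac:(lia)). unfold R_dist in *.
  assert (Hnpos : 0 < INR n) by (apply lt_0_INR; lia).
  pose proof (cnt_compl B n) as Hc.
  assert (E : INR (cnt (fun k => negb (B k)) n) = INR n - INR (cnt B n)).
  { apply (f_equal INR) in Hc. rewrite plus_INR in Hc. lra. }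
  rewrite E. replace ((INR n - INR (cnt B n)) / INR n - (1 - x))
    with (- (INR (cnt B n) / INR n - x)) by (field; lra).
  rewrite Rabs_Ropp. exact HN.
Qed.

Theorem lemma3p7 (A : nat -> bool) :
  (exists (B : nat -> bool) (x : R),
      subsetN B A /\ has_density B x /\ is_lower_dd A x) /\
  (exists (C : nat -> bool) (y : R),
      subsetN A C /\ has_density C y /\ is_upper_dd A y).
Proof.
  split; [apply lower_part|].
  destruct (lower_part (fun k => negb (A k))) as [B [x [Hsub [Hd [Hub Hl]]]]].
  exists (fun k => negb (B k)), (1 - x). split; [|split].
  - intros n Hn HA. specialize (Hsub n Hn). destruct (B n); [|reflexivity].
    rewrite HA in Hsub. simpl in Hsub. specialize (Hsub eq_refl). discriminate.
  - apply compl_density. exact Hd.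
  - split.
    + intros d [C [HAC HC]].
      assert (1 - d <= x); [|lra].
      apply Hub. exists (fun k => negb (C k)). split; [|apply compl_density; exact HC].
      intros n Hn HCn. destruct (A n) eqn:EA; [|reflexivity].
      rewrite (HAC n Hn EA) in HCn. discriminate.
    + intros b Hb. assert (x <= 1 - b); [|lra].
      apply Hl. intros e [B' [HB'sub HB']].
      assert (b <= 1 - e); [|lra].
      apply Hb. exists (fun k => negb (B' k)). split; [|apply compl_density; exact HB'].
      intros n Hn HAn. destruct (B' n) eqn:EB; [|reflexivity].
      specialize (HB'sub n Hn EB). cbv beta in HB'sub. rewrite HAn in HB'sub. discriminate.
Qed.
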